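(* Let $N\ge 2$ and $0<\gamma_1\le\gamma_2\le\dots\le\gamma_N$. Among the spanning trees $T$ on $\{1,\dots,N\}$ that maximize $\rho(T)$, there is one in which vertex $1$ has exactly one neighbor, namely vertex $2$.
   Context: For distinct $i,j$ put $\varphi(i,j)=\log_2\!\big(\gamma_i+\frac{\gamma_i}{\gamma_i+\gamma_j}\big)$. For a spanning tree $T$ on $\{1,\dots,N\}$ define $\rho(T)=\min\{\varphi(i,j): \{i,j\}\in E(T),\ \gamma_i\le\gamma_j\}$ (equivalently the minimum of $\varphi(i,j)$ over all ordered pairs $(i,j)$ with $\{i,j\}\in E(T)$). *)

(* Defs.v *)
From mathcomp Require Import all_boot.
From Stdlib Require Import Reals.
Set Implicit Arguments. Unset Strict Implicit. Unset Printing Implicit Defensive.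

(* Vertices {1,...,N} are represented by 'I_N (vertex k+1 <-> ordinal k). *)

Definition log2 (x : R) : R := (ln x / ln 2)%R.

Definition phi {N : nat} (gamma : 'I_N -> R) (i j : 'I_N) : R :=
  log2 (gamma i + gamma i / (gamma i + gamma j))%R.

Definition adj {N : nat} (T : {set {set 'I_N}}) : rel 'I_N :=
  fun u v => [set u; v] \in T.

Definition connectedb {N : nat} (T : {set {set 'I_N}}) : bool :=
  [forall u, forall v, connect (adj T) u v].

(* Spanning tree: simple edges, connected, and minimally connected
   (deleting any edge disconnects the graph), i.e. connected and acyclic. *)
Definition spanning_tree {N : nat} (T : {set {set 'I_N}}) : Prop :=
  (forall e, e \in T -> #|e| = 2) /\
  connectedb T /\
  (forall e, e \in T -> ~~ connectedb (T :\ e)).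

Definition edge_values {N : nat} (gamma : 'I_N -> R) (T : {set {set 'I_N}}) : seq R :=
  [seq phi gamma p.1 p.2 | p <- enum [pred p : 'I_N * 'I_N | (p.1 != p.2) && ([set p.1; p.2] \in T)]].

Definition rho {N : nat} (gamma : 'I_N -> R) (T : {set {set 'I_N}}) : R :=
  let s := edge_values gamma T in foldr Rmin (head 0%R s) s.

(* Main.v *)
Require Import Defs.
From mathcomp Require Import all_boot.
From Stdlib Require Import Reals.
From Stdlib Require Import Lra Classical.

Lemma F_mono (a b c d : R) : (0 < a)%R -> (a <= c)%R -> (0 < d)%R -> (d <= b)%R ->
  (a + a/(a+b) <= c + c/(c+d))%R.
Proof.
intros ha hac hd hdb.
assert (H1: (a/(a+b) <= c/(c+d))%R).
{ apply (Rmult_le_reg_r ((a+b)*(c+d))). nra.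
  replace (a / (a + b) * ((a + b) * (c + d)))%R with (a*(c+d))%R by (field; lra).
  replace (c / (c + d) * ((a + b) * (c + d)))%R with (c*(a+b))%R by (field; lra). nra. }
lra.
Qed.

Lemma log2_mono x y : (0 < x)%R -> (x <= y)%R -> (log2 x <= log2 y)%R.
Proof.
intros hx hxy. unfold log2, Rdiv. apply Rmult_le_compat_r.
- left. apply Rinv_0_lt_compat. rewrite <- ln_1. apply ln_increasing; lra.
- destruct hxy as [h|h]. left; apply ln_increasing; lra. rewrite h; lra.
Qed.

Lemma phi_mono N (gamma : 'I_N -> R) (hpos : forall i, (0 < gamma i)%R) a b c d :
  (gamma a <= gamma c)%R -> (gamma d <= gamma b)%R -> (phi gamma a b <= phi gamma c d)%R.
Proof.
intros h1 h2. unfold phi. apply log2_mono.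
- have := hpos a; have := hpos b. intros. 
  assert (0 < gamma a / (gamma a + gamma b))%R. { apply Rdiv_lt_0_compat; lra. } lra.
- apply F_mono; auto.
Qed.

Section Folds.
Variable X : eqType.
Variable f : X -> R.

Lemma foldr_le (l : seq X) d p : p \in l -> (foldr Rmin d (map f l) <= f p)%R.
Proof.
elim: l => [|a l IH] //=. rewrite in_cons => /orP [/eqP ->|hp].
- apply Rmin_l.
- eapply Rle_trans; [apply Rmin_r|]. by apply IH.
Qed.

Lemma foldr_att (l : seq X) d : foldr Rmin d (map f l) = d \/
  exists2 p, p \in l & foldr Rmin d (map f l) = f p.
Proof.
elim: l => [|a l IH] /=; first by left.
destruct (Rle_dec (f a) (foldr Rmin d [seq f i | i <- l])) as [hl|hl].
- right. exists a. by rewrite in_cons eqxx. by apply Rmin_left.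
- rewrite Rmin_right; last by apply Rlt_le, Rnot_le_lt.
  destruct IH as [->|[p hp e]]. by left. right. exists p => //. by rewrite in_cons hp orbT.
Qed.

Lemma foldr_att2 (l : seq X) : l <> [::] ->
  exists2 p, p \in l & foldr Rmin (head 0%R (map f l)) (map f l) = f p.
Proof.
case: l => [//|a l] _. destruct (foldr_att (a :: l) (f a)) as [e|h]; last exact h.
exists a. by rewrite in_cons eqxx. exact e.
Qed.
End Folds.

Lemma pick_max (X : eqType) (P : X -> Prop) (f : X -> R) (s : seq X) :
  (exists x, x \in s /\ P x) -> exists x, P x /\ forall y, y \in s -> P y -> (f y <= f x)%R.
Proof.
elim: s => [|a s IH]; first by move=> [x [h _]].
move=> [x [hx Px]].
destruct (classic (exists x, x \in s /\ P x)) as [h|h].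
- destruct (IH h) as [m [Pm hm]].
  destruct (classic (P a)) as [Pa|nPa].
  + destruct (Rle_dec (f a) (f m)).
    * exists m; split => // y; rewrite in_cons => /orP [/eqP ->|hy] Py //. by apply hm.
    * exists a; split => // y; rewrite in_cons => /orP [/eqP ->|hy] Py. lra.
      have := hm y hy Py. lra.
  + exists m; split => // y; rewrite in_cons => /orP [/eqP ->|hy] Py //. by apply hm.
- exists a. move: hx; rewrite in_cons => /orP [/eqP e|hx]; last by exfalso; apply h; exists x.
  subst x. split => // y; rewrite in_cons => /orP [/eqP ->|hy] Py. lra.
  exfalso; apply h; exists y; auto.
Qed.

Lemma sub_tree N (G : {set {set 'I_N}}) : (forall e, e \in G -> #|e| = 2) -> connectedb G ->
  exists T : {set {set 'I_N}}, T \subset G /\ spanning_tree T.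
Proof.
move=> h2 hc.
have P0 : [pred A : {set {set 'I_N}} | (A \subset G) && connectedb A] G by rewrite /= subxx hc.
case: (minset_exists P0) => T hm _.
move/minsetP: hm => [/= /andP [hTG hTc] hmin].
exists T; split => //; split; [|split] => //.
- move=> e he; apply h2; exact: (subsetP hTG).
- move=> e he; apply/negP => hc'.
  have := hmin (T :\ e). rewrite /= hc' andbT.
  have hs : T :\ e \subset T by apply subD1set.
  move=> /(_ (subset_trans hs hTG) hs) E.
  by move: he; rewrite -E setD11.
Qed.

Lemma set2_eq (T : finType) (x y u v : T) : x != y -> [set x; y] = [set u; v] ->
  (x = u /\ y = v) \/ (x = v /\ y = u).
Proof.
move=> nxy E.
have hx : x \in [set u; v] by rewrite -E set21.
have hy : y \in [set u; v] by rewrite -E set22.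
case/set2P: hx => ex; case/set2P: hy => ey; subst; auto;
  by move: nxy; rewrite eqxx.
Qed.

Theorem lemma1 (N : nat) (hN : (2 <= N)%N) (gamma : 'I_N -> R)
  (hpos : forall i : 'I_N, (0 < gamma i)%R)
  (hsorted : forall i j : 'I_N, (i <= j)%N -> (gamma i <= gamma j)%R) :
  exists T : {set {set 'I_N}},
    spanning_tree T /\
    (forall T' : {set {set 'I_N}}, spanning_tree T' -> (rho gamma T' <= rho gamma T)%R) /\
    (forall u v : 'I_N, nat_of_ord u = 0%N -> ([set u; v] \in T <-> nat_of_ord v = 1%N)).
Proof.
have h0 : (0 < N)%N by apply: leq_trans hN.
have h1 : (1 < N)%N by [].
pose o0 := Ordinal h0. pose o1 := Ordinal h1.
have n01 : o0 != o1 by [].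
pose K := [set e : {set 'I_N} | #|e| == 2].
have [T0 [_ hT0]] : exists T : {set {set 'I_N}}, T \subset K /\ spanning_tree T.
{ apply sub_tree. by move=> e; rewrite inE => /eqP.
  apply/forallP => u; apply/forallP => v.
  case: (eqVneq u v) => [->|nuv]; first exact: connect0.
  apply: connect1. by rewrite /adj inE cards2 nuv. }
have [T [hT Topt]] := @pick_max _ spanning_tree (rho gamma) (enum {set {set 'I_N}})
  (ex_intro _ T0 (conj (mem_enum _ T0) hT0)).
have Topt' : forall T', spanning_tree T' -> (rho gamma T' <= rho gamma T)%R.
{ move=> T' h; apply Topt => //; exact: mem_enum. }
case: hT => [hT2 [hTc hTmin]].
pose h := fun x : 'I_N => if x == o0 then o1 else x.
have hne0 : forall x, h x != o0.
{ move=> x; rewrite /h; case: (eqVneq x o0) => [_|nx] //. }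
pose T' := [set e | (e == [set o0; o1]) || [exists e0 in T, (e == h @: e0) && (#|h @: e0| == 2)]].
have e01 : [set o0; o1] \in T' by rewrite inE eqxx.
have hT'2 : forall e, e \in T' -> #|e| = 2.
{ move=> e; rewrite inE => /orP [/eqP ->|/existsP [e0 /andP [_ /andP [/eqP -> /eqP //]]]].
  by rewrite cards2 n01. }
have himg : forall a b, h a != h b -> [set a; b] \in T -> [set h a; h b] \in T'.
{ move=> a b nab hab. rewrite inE; apply/orP; right; apply/existsP; exists [set a; b].
  rewrite hab /= imsetU1 imset_set1 eqxx /= cards2 nab //. }
have hT'c : connectedb T'.
{ apply/forallP => x; apply/forallP => y.
  have step : forall a b, adj T a b -> connect (adj T') (h a) (h b).
  { move=> a b hab. case: (eqVneq (h a) (h b)) => [->|nab]; first exact: connect0.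
    apply: connect1. exact: himg. }
  have hp : forall p a, path (adj T) a p -> connect (adj T') (h a) (h (last a p)).
  { elim => [|b p IH] a /=; first by move=> _; exact: connect0.
    move=> /andP [hab hp]. apply: connect_trans (step _ _ hab) (IH _ hp). }
  have toh : forall a, connect (adj T') a (h a).
  { move=> a; rewrite /h; case: eqP => [->|_]; last exact: connect0.
    apply: connect1; exact: e01. }
  have fromh : forall a, connect (adj T') (h a) a.
  { move=> a; rewrite /h; case: eqP => [->|_]; last exact: connect0.
    apply: connect1; by rewrite /adj setUC. }
  have := forallP (forallP hTc x) y. case/connectP => p hpa ->.
  apply: connect_trans (toh x) _. apply: connect_trans (hp _ _ hpa) _. exact: fromh. }
set pr := fun (G : {set {set 'I_N}}) => [pred p : 'I_N * 'I_N | (p.1 != p.2) && ([set p.1; p.2] \in G)].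
have rhoE : forall G, rho gamma G = foldr Rmin (head 0%R (map (fun p => phi gamma p.1 p.2) (enum (pr G))))
   (map (fun p => phi gamma p.1 p.2) (enum (pr G))) by [].
have rho_le : forall G p, p \in pr G -> (rho gamma G <= phi gamma p.1 p.2)%R.
{ move=> G p hp. rewrite rhoE. apply (@foldr_le _ (fun p : 'I_N * 'I_N => phi gamma p.1 p.2)).
  by rewrite mem_enum. }
have rho_att : forall G, (o0, o1) \in pr G -> exists2 p, p \in pr G & rho gamma G = phi gamma p.1 p.2.
{ move=> G hG. rewrite rhoE.
  have := @foldr_att2 _ (fun p : 'I_N * 'I_N => phi gamma p.1 p.2) (enum (pr G)).
  case. by move=> E; move: hG; rewrite -mem_enum E.
  move=> p; rewrite mem_enum => hp e; by exists p. }
have geq1 : forall a : 'I_N, a != o0 -> (1 <= a)%N.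
{ move=> a; rewrite lt0n; apply: contra => /eqP e. by apply/eqP; apply: val_inj. }
have g01 : (gamma o0 <= gamma o1)%R by apply hsorted.
have g0 : forall a : 'I_N, (gamma o0 <= gamma a)%R by move=> a; apply hsorted.
have pm := @phi_mono N gamma hpos.
have T_T' : (rho gamma T <= rho gamma T')%R.
{ have q01 : (o0, o1) \in pr T' by apply/andP; split.
  have [p hp ->] := rho_att T' q01.
  move: hp; rewrite inE /= => /andP [np12 hp].
  move: hp; rewrite inE => /orP [/eqP E|/existsP [e0 /andP [he0 /andP [/eqP E hc2]]]].
  -
    have := forallP (forallP hTc o0) o1. case/connectP => [[|k q]] /=.
      by move=> _ e; move: n01; rewrite -e eqxx.
    move=> /andP [hk _] _.
    have nk0 : k != o0.
    { apply/negP => /eqP ek. move: (hT2 _ hk); rewrite ek setUid cards1 //. }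
    have hq : (o0, k) \in pr T by rewrite inE /= eq_sym nk0.
    apply: Rle_trans (rho_le _ _ hq) _ => /=.
    case: (@set2_eq _ _ _ _ _ np12 E) => [[-> ->]|[-> ->]]; apply pm => //; try lra.
    + by apply hsorted, geq1.
  - have := hT2 _ he0 => /eqP /cards2P [a [b [nab ea]]]. subst e0.
    move: E; rewrite imsetU1 imset_set1 => E.
    have nhab : h a != h b by move: hc2; rewrite imsetU1 imset_set1 cards2; case: (h a != h b).
    have hab : [set a; b] \in T by [].
    have hba : [set b; a] \in T by rewrite setUC.
    have key : forall a b, a != b -> [set a; b] \in T -> h a != h b ->
      (rho gamma T <= phi gamma (h a) (h b))%R.
    { move=> a' b' nab' hab' nh.
      rewrite /h. case: (eqVneq a' o0) => [ea'|na']; case: (eqVneq b' o0) => [eb'|nb'].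
      - by move: nab'; rewrite ea' eb' eqxx.
      - apply: Rle_trans (rho_le T (o0, b') _) _. by rewrite inE /= eq_sym nb' -ea'.
        apply pm => //=; lra.
      - apply: Rle_trans (rho_le T (o0, a') _) _. by rewrite inE /= eq_sym na' -eb' setUC.
        apply pm => //=. apply hsorted, geq1 => //. 
      - apply: (rho_le T (a', b')). by rewrite inE /= nab'. }
    case: (@set2_eq _ _ _ _ _ np12 E) => [[-> ->]|[-> ->]].
    + by apply key.
    + apply key => //. by rewrite eq_sym. by rewrite eq_sym. }
have [T'' [hsub hT'']] := @sub_tree N T' hT'2 hT'c.
have no0 : forall v, [set o0; v] \in T'' -> v = o1.
{ move=> v hv. have := subsetP hsub _ hv. rewrite inE => /orP [/eqP E|/existsP [e0 /andP [_ /andP [/eqP E _]]]].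
  - have : v \in [set o0; o1] by rewrite -E set22.
    case/set2P => // ev. move: (hT'2 _ (subsetP hsub _ hv)). by rewrite ev setUid cards1.
  - have : o0 \in h @: e0 by rewrite -E set21.
    case/imsetP => x _ ex. by move: (hne0 x); rewrite -ex eqxx. }
case: hT'' => [hT''2 [hT''c hT''min]].
have e01' : [set o0; o1] \in T''.
{ have := forallP (forallP hT''c o0) o1. case/connectP => [[|k q]] /=.
    by move=> _ e; move: n01; rewrite -e eqxx.
  move=> /andP [hk _] _. by rewrite -(no0 _ hk). }
exists T''; split; [split; [|split] |split] => //.
- move=> T1 hT1. apply: Rle_trans (Topt' _ hT1) _. apply: Rle_trans T_T' _.
  have q01 : (o0, o1) \in pr T'' by apply/andP; split.
  have [p hp ->] := rho_att T'' q01.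
  apply rho_le. move: hp => /andP [hn hp]; apply/andP; split => //; exact: (subsetP hsub).
- move=> u v hu. have -> : u = o0 by apply: val_inj.
  split.
  + by move/no0 => ->.
  + move=> hv. have -> : v = o1 by apply: val_inj. exact e01'.
Qed.
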